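(* Let $p\ge 7$ be a prime. Then $$\sum_{1\le i<j<k\le p-1}\frac{1}{i^2jk}\equiv \sum_{1\le i<j<k\le p-1}\frac{1}{ijk^2}\equiv -\frac{1}{2}\sum_{1\le i<j<k\le p-1}\frac{1}{ij^2k}\pmod{p}.$$
   Context: Sums are over integers $i,j,k$. Congruences modulo $p$ are taken in the ring of rationals with denominators not divisible by $p$. *)

(* Defs.v *)
From HB Require Import structures.
From mathcomp Require Import all_boot all_order all_algebra.
Set Implicit Arguments. Unset Strict Implicit. Unset Printing Implicit Defensive.
Import Order.TTheory GRing.Theory Num.Theory.
Local Open Scope ring_scope.

(* Congruence modulo p in the ring Z_(p) of rationals whose denominator is not
   divisible by p:  a == b (mod p)  iff  a - b = p * r  with r in Z_(p). *)
Definition ratcong (p : nat) (a b : rat) : Prop :=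
  exists r : rat, ~~ (p %| `|denq r|)%N /\ a - b = p%:R * r.

Definition S3 (p : nat) (f : nat -> nat -> nat -> rat) : rat :=
  \sum_(1 <= i < p) \sum_(i.+1 <= j < p) \sum_(j.+1 <= k < p) f i j k.

(* Main.v *)
Require Import Defs.
From HB Require Import structures.
From mathcomp Require Import all_boot all_order all_algebra.
From mathcomp Require Import ring lra zify.
Set Implicit Arguments. Unset Strict Implicit. Unset Printing Implicit Defensive.
Import Order.TTheory GRing.Theory Num.Theory.
Local Open Scope ring_scope.


Section Gen.
Variable R : comRingType.

Definition S3R (N : nat) (f : nat -> nat -> nat -> R) : R :=
  \sum_(1 <= i < N) \sum_(i.+1 <= j < N) \sum_(j.+1 <= k < N) f i j k.

Lemma eq_S3R N f g : (forall i j k, (0 < i)%N -> (i < j)%N -> (j < k)%N -> (k < N)%N -> f i j k = g i j k) ->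
  S3R N f = S3R N g.
Proof.
move=> H; apply: eq_big_nat => i /andP[hi hiN]; apply: eq_big_nat => j /andP[hj hjN].
apply: eq_big_nat => k /andP[hk hkN]; exact: H.
Qed.

Lemma S3R_triple N g : S3R N g =
  \sum_(t : 'I_N * ('I_N * 'I_N) | (0 < t.1)%N && ((t.1 < t.2.1)%N && (t.2.1 < t.2.2)%N))
     g t.1 t.2.1 t.2.2.
Proof.
rewrite /S3R big_geq_mkord.
under eq_bigr => i _ do rewrite big_geq_mkord.
under eq_bigr => i _ do under eq_bigr => j _ do rewrite big_geq_mkord.
under eq_bigr => i _ do rewrite (pair_big_dep (fun j : 'I_N => (i < j)%N) (fun j (k : 'I_N) => (j < k)%N)
      (fun j k => g i j k)).
by rewrite (pair_big_dep (fun i : 'I_N => (0 < i)%N)).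
Qed.

Lemma negI_proof N (hN : (0 < N)%N) (i : 'I_N) : ((if nat_of_ord i == 0%N then 0 else N - i) < N)%N.
Proof. case: eqP => h //. have := ltn_ord i. move: h. lia. Qed.

Definition negI N (hN : (0 < N)%N) (i : 'I_N) : 'I_N := Ordinal (negI_proof hN i).

Lemma negIK N (hN : (0 < N)%N) : involutive (negI hN).
Proof.
move=> i; apply: val_inj => /=; have := ltn_ord i.
case: (eqVneq (nat_of_ord i) 0%N) => [->|h] //= hi.
case: eqP; lia.
Qed.

Lemma S3R_rev N (hN : (0 < N)%N) g :
  S3R N g = S3R N (fun i j k => g (N - k)%N (N - j)%N (N - i)%N).
Proof.
rewrite !S3R_triple.
pose h (t : 'I_N * ('I_N * 'I_N)) := (negI hN t.2.2, (negI hN t.2.1, negI hN t.1)).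
have hinv : involutive h by move=> [a [b c]]; rewrite /h /= !negIK.
rewrite (reindex_inj (inv_inj hinv)).
apply: eq_big => [[a [b c]]|[a [b c]]] /=.
  have := ltn_ord a; have := ltn_ord b; have := ltn_ord c.
  by case: ifP => /eqP ?; case: ifP => /eqP ?; case: ifP => /eqP ?; lia.
by case: ifP => /eqP ?; case: ifP => /eqP ?; case: ifP => /eqP ?; move=> /and3P[? ? ?]; congr g; lia.
Qed.


Lemma D2gen m n (F : nat -> nat -> R) : (m <= n)%N ->
  \sum_(m <= i < n.+1) \sum_(i.+1 <= j < n.+1) F i j =
  \sum_(m <= i < n) \sum_(i.+1 <= j < n) F i j + \sum_(m <= i < n) F i n.
Proof.
move=> hmn; rewrite big_nat_recr //= [\sum_(n.+1 <= j < n.+1) _]big_geq // addr0 -big_split.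
apply: eq_big_nat => i /andP[_ hi]; rewrite big_nat_recr //.
Qed.

Lemma D3 n g : (1 <= n)%N ->
  S3R n.+1 g = S3R n g + \sum_(1 <= i < n) \sum_(i.+1 <= j < n) g i j n.
Proof.
move=> hn; rewrite /S3R big_nat_recr //= [\sum_(n.+1 <= j < n.+1) _]big_geq // addr0 -big_split.
apply: eq_big_nat => i /andP[_ hi]; rewrite D2gen //.
Qed.

Variable x : nat -> R.
Definition Pw N m := \sum_(1 <= i < N) x i ^+ m.
Definition E2 N := \sum_(1 <= i < N) \sum_(i.+1 <= j < N) x i * x j.
Definition Q2 N := \sum_(1 <= i < N) \sum_(i.+1 <= j < N) (x i ^+ 2 * x j + x i * x j ^+ 2).
Definition T3 N := S3R N (fun i j k => x i ^+ 2 * x j * x k + x i * x j ^+ 2 * x k + x i * x j * x k ^+ 2).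

Lemma T3_ident n :
  [/\ 2%:R * E2 n.+1 = Pw n.+1 1 ^+ 2 - Pw n.+1 2,
      Q2 n.+1 = Pw n.+1 1 * Pw n.+1 2 - Pw n.+1 3 &
      2%:R * T3 n.+1 = Pw n.+1 2 * Pw n.+1 1 ^+ 2 - 2%:R * Pw n.+1 3 * Pw n.+1 1
                   - Pw n.+1 2 ^+ 2 + 2%:R * Pw n.+1 4].
Proof.
elim: n => [|n [IH1 IH2 IH3]].
  by rewrite /E2 /Q2 /T3 /S3R /Pw !big_geq //; split; ring.
have hP m : Pw n.+2 m = Pw n.+1 m + x n.+1 ^+ m by rewrite /Pw big_nat_recr.
have hE : E2 n.+2 = E2 n.+1 + Pw n.+1 1 * x n.+1.
  have e1 : Pw n.+1 1 = \sum_(1<=i<n.+1) x i by apply: eq_bigr => i _; rewrite expr1.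
  rewrite /E2 D2gen // e1 mulr_suml. reflexivity.
have hQ : Q2 n.+2 = Q2 n.+1 + (Pw n.+1 2 * x n.+1 + Pw n.+1 1 * x n.+1 ^+ 2).
  have e1 : Pw n.+1 1 = \sum_(1<=i<n.+1) x i by apply: eq_bigr => i _; rewrite expr1.
  by rewrite /Q2 D2gen // e1 /Pw !mulr_suml -[X in _ = _ + X]big_split.
have hT : T3 n.+2 = T3 n.+1 + (x n.+1 * Q2 n.+1 + x n.+1 ^+ 2 * E2 n.+1).
  rewrite /T3 D3 //; congr (_ + _).
  rewrite /Q2 /E2 !mulr_sumr -big_split; apply: eq_bigr => i _.
  rewrite !mulr_sumr -big_split; apply: eq_bigr => j _ /=; ring.
rewrite hE hQ hT !hP; split.
- rewrite mulrDr IH1; ring.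
- rewrite IH2; ring.
- have -> : 2%:R * (T3 n.+1 + (x n.+1 * Q2 n.+1 + x n.+1 ^+ 2 * E2 n.+1)) =
     2%:R * T3 n.+1 + x n.+1 ^+ 2 * (2%:R * E2 n.+1) + 2%:R * x n.+1 * Q2 n.+1 by ring.
  rewrite IH3 IH1 IH2; ring.
Qed.
End Gen.


Section Fp1.
Variable p : nat.
Hypothesis hp : prime p.

Lemma sum_Fp (f : 'F_p -> 'F_p) :
  \sum_(1 <= i < p) f i%:R = \sum_(y : 'F_p | y != 0) f y.
Proof.
have hp0 : (0 < p)%N := prime_gt0 hp.
rewrite -[in X in \sum_(1 <= i < X) _](Fp_cast hp).
transitivity (\sum_(0 <= i < (Zp_trunc (pdiv p)).+2 | i != 0%N) f i%:R).
  rewrite [RHS]big_ltn_cond //= big_nat_cond [RHS]big_nat_cond.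
  by apply: eq_bigl => i; case: i => [|i] //=; rewrite andbT.
rewrite big_mkord; apply: eq_big => [y|y _]; last by rewrite natr_Zp.
done.
Qed.


Lemma natFp0 n : ((n%:R : 'F_p) == 0) = (p %| n)%N.
Proof. by rewrite (dvdn_pcharf (pchar_Fp hp)). Qed.

Lemma pw_gen m (a : 'F_p) : a != 0 -> a ^+ m != 1 ->
  \sum_(y : 'F_p | y != 0) (y^-1) ^+ m = 0.
Proof.
move=> a0 am.
set s := \sum_(y : 'F_p | y != 0) _.
have hs : s = a^-1 ^+ m * s.
  rewrite {1}/s (reindex_inj (mulfI a0)) /s mulr_sumr; apply: eq_big => [y|y _] /=.
    by rewrite mulf_eq0 (negbTE a0).
  by rewrite invfM exprMn.
have : (1 - a^-1 ^+ m) * s = 0 by rewrite mulrBl mul1r -hs subrr.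
move/eqP; rewrite mulf_eq0 => /orP[|/eqP //].
by rewrite subr_eq0 eq_sym exprVn invr_eq1 (negbTE am).
Qed.

Hypothesis h7 : (7 <= p)%N.

Lemma pw0 m : (0 < m < 5)%N -> \sum_(1 <= i < p) ((i%:R : 'F_p)^-1) ^+ m = 0.
Proof.
move=> hm; rewrite (sum_Fp (fun y => y^-1 ^+ m)).
have n0 n : (0 < n < 7)%N -> (n%:R : 'F_p) != 0.
  move=> hn; rewrite natFp0; apply/negP => /dvdn_leq; lia.
have h2 : (2%:R : 'F_p) != 0 by apply: n0.
have [mo|me] := boolP (odd m).
  apply: (@pw_gen _ (-1)); first by rewrite oppr_eq0 oner_eq0.
  rewrite -signr_odd mo expr1; apply/negP => /eqP h.
  by move: h2; rewrite mulr2n -{1}h addNr eqxx.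
have : (m == 2)%N || (m == 4)%N by move: hm me; case: m => [|[|[|[|[|]]]]].
case/orP=> /eqP ->; apply: (@pw_gen _ 2%:R) => //; apply/eqP => h.
- have h' : (3%:R : 'F_p) + 1 = 1 by rewrite -[RHS]h -natrX -mulrSr.
  by move: (n0 3%N isT); rewrite -(addrK 1 (3%:R : 'F_p)) h' subrr eqxx.
- have : ((15%N)%:R : 'F_p) + 1 = 1 by rewrite -[RHS]h -natrX -mulrSr.
  move=> h'; have : ((15%N)%:R : 'F_p) == 0 by rewrite -(addrK 1 (15%:R : 'F_p)) h' subrr.
  rewrite natFp0 => hd.
  have : (p %| 3 * 5)%N by []. rewrite Euclid_dvdM // => /orP[] /dvdn_leq; lia.
Qed.
End Fp1.



Section Q.
Variable p : nat.
Hypothesis hp : prime p.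

Definition pint (r : rat) := ~~ (p %| `|denq r|)%N.

Lemma pint_frac (n d : int) : d != 0 -> ~~ (p %| `|d|)%N -> pint (n%:~R / d%:~R).
Proof.
move=> d0; rewrite /pint; case: divqP => [/eqP|k x k0]; first by rewrite (negbTE d0).
by rewrite abszM; apply: contra; apply: dvdn_mull.
Qed.

Lemma pintE r : pint r -> exists n d : int, [/\ d != 0, ~~ (p %| `|d|)%N & r = n%:~R / d%:~R].
Proof. by move=> h; exists (numq r), (denq r); rewrite denq_neq0 divq_num_den. Qed.

Lemma ndvdM (a b : int) : ~~ (p %| absz a)%N -> ~~ (p %| absz b)%N -> ~~ (p %| absz (a * b)%R)%N.
Proof. by rewrite abszM Euclid_dvdM // => /negbTE -> /negbTE ->. Qed.

Lemma pintD r s : pint r -> pint s -> pint (r + s).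
Proof.
move=> /pintE[a [b [b0 pb ->]]] /pintE[c [d [d0 pd ->]]].
have -> : a%:~R / b%:~R + c%:~R / d%:~R = (a * d + c * b)%:~R / (b * d)%:~R :> rat.
  have b0' : (b%:~R : rat) != 0 by rewrite intr_eq0.
  have d0' : (d%:~R : rat) != 0 by rewrite intr_eq0.
  rewrite !rmorphD !rmorphM /=; field; by apply/andP.
by apply: pint_frac; [rewrite mulf_eq0 negb_or b0 d0 | apply: ndvdM].
Qed.

Lemma pintM r s : pint r -> pint s -> pint (r * s).
Proof.
move=> /pintE[a [b [b0 pb ->]]] /pintE[c [d [d0 pd ->]]].
have -> : a%:~R / b%:~R * (c%:~R / d%:~R) = (a * c)%:~R / (b * d)%:~R :> rat.
  have b0' : (b%:~R : rat) != 0 by rewrite intr_eq0.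
  have d0' : (d%:~R : rat) != 0 by rewrite intr_eq0.
  rewrite !rmorphM /=; field; by apply/andP.
by apply: pint_frac; [rewrite mulf_eq0 negb_or b0 d0 | apply: ndvdM].
Qed.

Lemma pintN r : pint r -> pint (- r).
Proof. by rewrite /pint denqN. Qed.

Lemma pint_int (n : int) : pint n%:~R.
Proof. by rewrite /pint denq_int /= dvdn1; apply/eqP => h; move: (prime_gt1 hp); rewrite h. Qed.

Lemma cong_sym a b : ratcong p a b -> ratcong p b a.
Proof. by case=> r [hr e]; exists (- r); split; [apply: pintN | rewrite mulrN -e opprB]. Qed.

Lemma cong_trans a b c : ratcong p a b -> ratcong p b c -> ratcong p a c.
Proof.
case=> r [hr e] [s [hs f]]; exists (r + s); split; first exact: pintD.
by rewrite mulrDr -e -f; ring.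
Qed.

Lemma cong_add a b c d : ratcong p a b -> ratcong p c d -> ratcong p (a + c) (b + d).
Proof.
case=> r [hr e] [s [hs f]]; exists (r + s); split; first exact: pintD.
by rewrite mulrDr -e -f; ring.
Qed.

Lemma cong_scale c a b : pint c -> ratcong p a b -> ratcong p (c * a) (c * b).
Proof.
move=> hc [r [hr e]]; exists (c * r); split; first exact: pintM.
by rewrite -mulrBr e; ring.
Qed.

Lemma cong_refl a : ratcong p a a.
Proof. by exists 0; rewrite subrr mulr0; split => //; apply: (pint_int 0). Qed.

Lemma cong_sumnat m n (F G : nat -> rat) : (forall i, (m <= i < n)%N -> ratcong p (F i) (G i)) ->
  ratcong p (\sum_(m <= i < n) F i) (\sum_(m <= i < n) G i).
Proof.
move=> h; rewrite big_nat_cond [X in ratcong _ _ X]big_nat_cond.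
apply: (big_rec2 (fun a b => ratcong p a b)); first exact: cong_refl.
by move=> i y1 y2 /andP[hi _] hy; apply: cong_add => //; apply: h.
Qed.

Lemma cong_nat a b : (a = b %[mod p])%N -> ratcong p a%:R b%:R.
Proof.
wlog hab : a b / (b <= a)%N.
  move=> W h; case: (leqP b a) => [|/ltnW] hb; first exact: W.
  by apply: cong_sym; apply: W.
move/eqP; rewrite eqn_mod_dvd // => /dvdnP[m hm].
exists m%:R; split; first exact: (pint_int m).
by rewrite -natrB // hm natrM mulrC.
Qed.

Lemma cong_inv n w : ~~ (p %| n)%N -> (n * w = 1 %[mod p])%N -> ratcong p (n%:R)^-1 w%:R.
Proof.
move=> pn hw.
have n0 : n != 0%N by apply: contra pn => /eqP ->.
have hw1 : (1 <= n * w)%N.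
  case: (posnP (n * w)) => // h0; move: hw; rewrite h0 mod0n modn_small ?prime_gt1 //.
have : (p %| n * w - 1)%N by rewrite -eqn_mod_dvd // hw.
case/dvdnP => m hm.
exists (- (m%:R / n%:R)); split.
  apply: pintN; apply: (pint_frac m (d := n%:Z)); first by rewrite eqz_nat.
  by [].
have n0' : (n%:R : rat) != 0 by rewrite pnatr_eq0.
have : ((n * w - 1)%N%:R : rat) = (m * p)%N%:R by rewrite hm.
rewrite natrB // !natrM => e.
have -> : (w%:R : rat) = (n%:R * w%:R) / n%:R by field.
rewrite (_ : n%:R * w%:R = (m%:R * p%:R) + 1); last by rewrite -e; ring.
field. all: try done.
Qed.
End Q.

Definition S3N (N : nat) (G : nat -> nat -> nat -> nat) : nat :=
  (\sum_(1 <= i < N) \sum_(i.+1 <= j < N) \sum_(j.+1 <= k < N) G i j k)%N.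

Lemma S3N_R (R : comNzRingType) N G : (S3N N G)%:R = @S3R R N (fun i j k => (G i j k)%:R).
Proof.
rewrite /S3N natr_sum; apply: eq_bigr => i _; rewrite natr_sum; apply: eq_bigr => j _.
by rewrite natr_sum.
Qed.

Section Main.
Variable p : nat.
Hypothesis hp : prime p.
Hypothesis h7 : (7 <= p)%N.

Definition inv_lift (n : nat) : nat := nat_of_ord ((n%:R : 'F_p)^-1).

Lemma inv_liftE n : ((inv_lift n)%:R : 'F_p) = (n%:R)^-1.
Proof. by rewrite /inv_lift natr_Zp. Qed.

Lemma Fp_mod a b : (a%:R : 'F_p) = b%:R -> (a = b %[mod p])%N.
Proof. by move=> h; rewrite -(val_Fp_nat hp) -(val_Fp_nat hp b) h. Qed.

Lemma cong_term n : ~~ (p %| n)%N -> ratcong p (n%:R)^-1 (inv_lift n)%:R.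
Proof.
move=> pn; apply: cong_inv => //; apply: Fp_mod.
rewrite natrM inv_liftE mulfV //; by rewrite natFp0.
Qed.

Lemma ndvd_lt i : (0 < i < p)%N -> ~~ (p %| i)%N.
Proof. by move=> /andP[h1 h2]; apply/negP => /dvdn_leq; lia. Qed.

Lemma ndvd3 i j k : (0 < i < p)%N -> (0 < j < p)%N -> (0 < k < p)%N ->
  ~~ (p %| i * j * k)%N.
Proof.
by move=> hi hj hk; rewrite !Euclid_dvdM // !negb_or !ndvd_lt.
Qed.

Definition nA i j k := (i * i * j * k)%N.
Definition nB i j k := (i * j * k * k)%N.
Definition nC i j k := (i * j * j * k)%N.

Lemma cong_S3 (n : nat -> nat -> nat -> nat) (f : nat -> nat -> nat -> rat) :
  (forall i j k, f i j k = ((n i j k)%:R)^-1) ->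
  (forall i j k, (0 < i < p)%N -> (0 < j < p)%N -> (0 < k < p)%N -> ~~ (p %| n i j k)%N) ->
  ratcong p (S3 p f) (S3N p (fun i j k => inv_lift (n i j k)))%:R.
Proof.
move=> hf hn; rewrite S3N_R /S3 /S3R.
apply: (cong_sumnat hp) => i /andP[hi hip]; apply: (cong_sumnat hp) => j /andP[hj hjp].
apply: (cong_sumnat hp) => k /andP[hk hkp]; rewrite hf; apply: cong_term; apply: hn; lia.
Qed.

Let x (i : nat) : 'F_p := (i%:R)^-1.

Lemma Fp_S3 (n : nat -> nat -> nat -> nat) (g : nat -> nat -> nat -> 'F_p) :
  (forall i j k, ((n i j k)%:R)^-1 = g i j k) ->
  ((S3N p (fun i j k => inv_lift (n i j k)))%:R : 'F_p) = @S3R _ p g.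
Proof.
by move=> h; rewrite S3N_R; apply: eq_S3R => i j k _ _ _ _; rewrite inv_liftE h.
Qed.

Lemma xA i j k : ((nA i j k)%:R)^-1 = x i ^+ 2 * x j * x k.
Proof. by rewrite /nA !natrM !invfM /x expr2. Qed.
Lemma xB i j k : ((nB i j k)%:R)^-1 = x i * x j * x k ^+ 2.
Proof. by rewrite /nB !natrM !invfM /x expr2 !mulrA. Qed.
Lemma xC i j k : ((nC i j k)%:R)^-1 = x i * x j ^+ 2 * x k.
Proof. by rewrite /nC !natrM !invfM /x expr2 !mulrA. Qed.

Lemma xN i : (i <= p)%N -> x (p - i) = - x i.
Proof.
by move=> hi; rewrite /x natrB // (pchar_Fp_0 hp) sub0r invrN.
Qed.

Lemma FpAB : @S3R _ p (fun i j k => x i ^+ 2 * x j * x k) = @S3R _ p (fun i j k => x i * x j * x k ^+ 2).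
Proof.
rewrite (S3R_rev (prime_gt0 hp)); apply: eq_S3R => i j k hi hij hjk hkp.
rewrite !xN; try lia. ring.
Qed.

Lemma S3R_add (R : comNzRingType) N f g :
  @S3R R N (fun i j k => f i j k + g i j k) = @S3R R N f + @S3R R N g.
Proof.
rewrite /S3R -big_split; apply: eq_bigr => i _; rewrite -big_split.
by apply: eq_bigr => j _; rewrite -big_split.
Qed.

Lemma FpABC : 2%:R * (@S3R _ p (fun i j k => x i ^+ 2 * x j * x k) +
   @S3R _ p (fun i j k => x i * x j ^+ 2 * x k) + @S3R _ p (fun i j k => x i * x j * x k ^+ 2)) = 0.
Proof.
have := T3_ident x p.-1; rewrite prednK ?prime_gt0 // => -[_ _].
rewrite /T3 !S3R_add => ->.
by rewrite /Pw !pw0 //; ring.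
Qed.

End Main.

Unset Implicit Arguments.

Theorem lemma2p7 (p : nat) (hp : prime p) (h7 : (7 <= p)%N) :
  ratcong p (S3 p (fun i j k => (i%:R ^+ 2 * j%:R * k%:R)^-1))
            (S3 p (fun i j k => (i%:R * j%:R * k%:R ^+ 2)^-1)) /\
  ratcong p (S3 p (fun i j k => (i%:R * j%:R * k%:R ^+ 2)^-1))
            (- (1 / 2%:R) * S3 p (fun i j k => (i%:R * j%:R ^+ 2 * k%:R)^-1)).
Proof.
pose GA i j k := inv_lift p (nA i j k).
pose GB i j k := inv_lift p (nB i j k).
pose GC i j k := inv_lift p (nC i j k).
have hrng i j k : (0 < i < p)%N -> (0 < j < p)%N -> (0 < k < p)%N ->
  [/\ ~~ (p %| nA i j k)%N, ~~ (p %| nB i j k)%N & ~~ (p %| nC i j k)%N].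
  move=> hi hj hk; rewrite /nA /nB /nC -!mulnA !Euclid_dvdM //.
  by rewrite !negb_or !ndvd_lt.
have hA : ratcong p (S3 p (fun i j k => (i%:R ^+ 2 * j%:R * k%:R)^-1)) (S3N p GA)%:R.
  apply: cong_S3 => //; first by move=> i j k; rewrite /nA !natrM expr2.
  by move=> i j k hi hj hk; case: (hrng i j k hi hj hk).
have hB : ratcong p (S3 p (fun i j k => (i%:R * j%:R * k%:R ^+ 2)^-1)) (S3N p GB)%:R.
  apply: cong_S3 => //; first by move=> i j k; rewrite /nB !natrM expr2 !mulrA.
  by move=> i j k hi hj hk; case: (hrng i j k hi hj hk).
have hC : ratcong p (S3 p (fun i j k => (i%:R * j%:R ^+ 2 * k%:R)^-1)) (S3N p GC)%:R.
  apply: cong_S3 => //; first by move=> i j k; rewrite /nC !natrM expr2 !mulrA.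
  by move=> i j k hi hj hk; case: (hrng i j k hi hj hk).
have FA : ((S3N p GA)%:R : 'F_p) = @S3R _ p (fun i j k => (i%:R)^-1 ^+ 2 * (j%:R)^-1 * (k%:R)^-1).
  exact: Fp_S3 (xA p).
have FB : ((S3N p GB)%:R : 'F_p) = @S3R _ p (fun i j k => (i%:R)^-1 * (j%:R)^-1 * (k%:R)^-1 ^+ 2).
  exact: Fp_S3 (xB p).
have FC : ((S3N p GC)%:R : 'F_p) = @S3R _ p (fun i j k => (i%:R)^-1 * (j%:R)^-1 ^+ 2 * (k%:R)^-1).
  exact: Fp_S3 (xC p).
have mAB : (S3N p GA = S3N p GB %[mod p])%N.
  by apply: (Fp_mod hp); rewrite FA FB (FpAB hp h7).
have dBC : (p %| 2 * S3N p GB + S3N p GC)%N.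
  rewrite -(natFp0 hp) natrD natrM FB FC.
  have := FpABC hp h7; rewrite (FpAB hp h7) => /eqP; rewrite mulf_eq0 => /orP[|].
    by rewrite (natFp0 hp) => /dvdn_leq; lia.
  set B := S3R p (fun i j k => _ / _ * _ ^+ 2); set C := S3R p _ => h.
  by rewrite (_ : 2%:R * B + C = B + C + B) //; ring.
split.
  apply: (cong_trans hp hA); apply: (cong_trans hp (cong_nat hp mAB)).
  exact: (cong_sym hB).
apply: (cong_trans hp hB).
apply: (@cong_trans p hp _ (- (1 / 2%:R) * (S3N p GC)%:R)); last first.
  apply: (cong_scale hp); last exact: cong_sym.
  by apply: pintN; rewrite -[1]/(1%:~R) -[2%:R]/(2%:~R : rat); apply: pint_frac => //; apply: ndvd_lt; lia.
case/dvdnP: dBC => m hm.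
exists (m%:R / 2%:R); split.
  by rewrite -[2%:R]/(2%:~R : rat); apply: (pint_frac (p:=p) m) => //; apply: ndvd_lt; lia.
have : (((2 * S3N p GB + S3N p GC)%N)%:R : rat) = (m * p)%N%:R by rewrite hm.
rewrite natrD !natrM => e.
have -> : ((S3N p GB)%:R : rat) = ((2%:R * (S3N p GB)%:R + (S3N p GC)%:R) - (S3N p GC)%:R) / 2%:R by field.
rewrite e; field; done.
Qed.
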